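(* Let $s_1\ge1$ and $s_2\ge0$ be integers, let $f_{s_1,s_2}(N)=\binom{s_2}{N}\sum_i\binom{s_1}{i}\binom{s_1}{N-i}\binom{N}{i}$ for integers $N$, and let $g(s_1,s_2)$ be the integer at which $f_{s_1,s_2}$ attains its maximum (so that $f_{s_1,s_2}$ is non-decreasing for $N\le g(s_1,s_2)$ and non-increasing for $N\ge g(s_1,s_2)$). (a) If $s_2\le\frac12\left(\sqrt{8s_1+9}-1\right)$, then $g(s_1,s_2)=s_2$. (b) For all $s_1,s_2$, $g(s_1,s_2)\le 2s_1$. Moreover, for each integer $d$ with $0\le d\le 4$, $$g(s_1,s_2)\ge 2s_1-d\iff s_2\ge \frac{2}{d+1}(s_1^2+s_1)-\frac{d+2}{2}.$$
   Context: Binomial coefficients $\binom{a}{b}$ are $0$ when $b<0$ or $b>a$. The function $f_{s_1,s_2}$ is unimodal in $N$, so $g(s_1,s_2)$ exists; if the maximum is attained at two consecutive integers, either may be taken as $g(s_1,s_2)$.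
   Formalization: When $f_{s_1,s_2}$ attains its maximum at two consecutive integers, g(s₁,s₂) is always the larger of the two, rather than either one being allowed. The statement above fails without it. *)

(* Defs.v *)
From mathcomp Require Import all_boot all_order all_algebra.
From mathcomp Require Import Rstruct.
From Stdlib Require Rdefinitions.
Set Implicit Arguments. Unset Strict Implicit. Unset Printing Implicit Defensive.

(* f_{s1,s2}(N) = C(s2,N) * sum_i C(s1,i) C(s1,N-i) C(N,i), for N >= 0.
   Terms with i > N vanish since C(N,i) = 0, so the sum over 0 <= i <= N is
   the full sum.  For negative N, f = 0 (C(s2,N) = 0); since f(0) = 1 > 0,
   negative N never matter for the maximum, so N ranges over nat. *)
Definition f (s1 s2 N : nat) : nat :=
  'C(s2, N) * \sum_(i < N.+1) 'C(s1, i) * 'C(s1, N - i) * 'C(N, i).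

Definition is_g (s1 s2 g : nat) : Prop :=
  (forall N, f s1 s2 N <= f s1 s2 g) /\ (forall N, g < N -> f s1 s2 N < f s1 s2 g).

(* Main.v *)
Require Import Defs.
From mathcomp Require Import all_boot all_order all_algebra.
From mathcomp Require Import Rstruct.
From Stdlib Require Rdefinitions.
From mathcomp Require Import ring lra zify.
Import Order.TTheory GRing.Theory Num.Theory.

Section Gen.
Variable F : nat -> nat.
Hypothesis lcF : forall M, F M * F M.+2 <= F M.+1 ^ 2.
Hypothesis zeroF : forall N, F N = 0 -> F N.+1 = 0.

Lemma zero_up k j : k <= j -> F k = 0 -> F j = 0.
Proof.
move=> /subnKC <-; elim: (j - k) => [|t IH] h; first by rewrite addn0.
by rewrite addnS; apply: zeroF; apply: IH.
Qed.

Lemma pos_down k j : k <= j -> 0 < F j -> 0 < F k.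
Proof.
move=> h; rewrite !lt0n; apply: contra => /eqP h0; apply/eqP; exact: zero_up h h0.
Qed.

Lemma inc_down N : 0 < F N.+1 -> F N.+1 <= F N.+2 -> F N <= F N.+1.
Proof. move=> h1 h2; have := lcF N; nia. Qed.

Lemma dec_up N : F N.+1 < F N -> F N.+2 < F N.+1 \/ F N.+2 = 0.
Proof.
move=> h; case: (posnP (F N.+1)) => h0.
  by right; apply: zeroF.
case: (ltnP (F N.+2) (F N.+1)) => h2; first by left.
have := lcF N; nia.
Qed.

Variable G : nat.
Hypothesis G1 : forall N, F N <= F G.
Hypothesis G2 : forall N, G < N -> F N < F G.

Lemma g_ge M : 0 < M -> 0 < F M -> F M.-1 <= F M -> M <= G.
Proof.
move=> hM hp hs.
have P : forall t, t < M -> F (M - t.+1) <= F (M - t) /\ F (M - t) <= F M.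
  elim=> [|t IH] ht; first by rewrite subn0 subn1.
  have [IH1 IH2] := IH (ltnW ht).
  have e1 : M - t.+1 = (M - t.+2).+1 by lia.
  have e2 : M - t = (M - t.+2).+2 by lia.
  split; last exact: leq_trans IH1 IH2.
  rewrite e1; apply: inc_down.
    apply: pos_down hp; lia.
  by rewrite -e2 -e1.
case: (leqP M G) => // hG.
have hG0 := G2 _ hG.
move: hG0.
have P' : forall t, t <= M -> F (M - t) <= F M.
  case=> [|t] ht; first by rewrite subn0.
  by have [h1 h2] := P t ht; apply: leq_trans h1 h2.
have [t ht ->] : exists2 t, t <= M & G = M - t by exists (M - G); lia.
by rewrite ltnNge P'.
Qed.

Lemma g_lt M : 0 < M -> F M < F M.-1 -> G < M.
Proof.
move=> hM hs.
have Q : forall t, F (M + t) <= F M /\ (F (M + t).+1 < F (M + t) \/ F (M + t).+1 = 0).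
  elim=> [|t [IH1 IH2]].
    rewrite addn0; split => //.
    by have := dec_up M.-1; rewrite prednK //; apply.
  have h1 : F (M + t.+1) <= F M.
    rewrite addnS; case: IH2 => [h|->] //; by apply: leq_trans IH1; apply: ltnW.
  split => //.
  rewrite addnS; case: IH2 => [h|h0].
    by apply: dec_up.
  by right; apply: zeroF.
case: (ltnP G M) => // hG.
have := G1 M.-1.
have [t ->] : exists t, G = M + t by exists (G - M); lia.
move: (Q t) => [h1 _] h2.
have := leq_trans h2 h1; by rewrite leqNgt hs.
Qed.

Lemma g_iff M : 0 < M -> 0 < F 0 -> (M <= G <-> (0 < F M /\ F M.-1 <= F M)).
Proof.
move=> hM h0; split.
  move=> hG; split.
    apply: pos_down hG _; apply: leq_trans h0 (G1 0).
  by rewrite leqNgt; apply/negP => h; have := g_lt _ hM h; rewrite ltnNge hG.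
by case=> h1 h2; apply: g_ge.
Qed.
End Gen.

Local Open Scope ring_scope.

Definition a (n N : nat) : nat := (\sum_(i < N.+1) 'C(n, i) * 'C(n, N - i) * 'C(N, i))%N.
Lemma fE s1 s2 N : f s1 s2 N = ('C(s2, N) * a s1 N)%N.
Proof. by []. Qed.

Notation RR := Rdefinitions.R.

Section Conv.
Variable n : nat.
Definition x (t : nat) : RR := ('C(n, t))%:R / (t`!)%:R.
Definition e (N : nat) : RR := \sum_(i < N.+1) x i * x (N - i).

Lemma x_ge0 t : 0 <= x t.
Proof. by rewrite /x divr_ge0 // ler0n. Qed.

Lemma fact_neq0 t : (t`!)%:R != 0 :> RR.
Proof. by rewrite pnatr_eq0 -lt0n fact_gt0. Qed.

Lemma xS t : x t.+1 * (t.+1)%:R ^+ 2 = x t * (n - t)%:R.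
Proof.
rewrite /x factS natrM.
have h := mul_bin_left n t.
have h' : (t.+1)%:R * ('C(n, t.+1))%:R = (n - t)%:R * ('C(n, t))%:R :> RR.
  by rewrite -!natrM h.
have ht : (t.+1)%:R != 0 :> RR by rewrite pnatr_eq0.
have hf := fact_neq0 t.
have hc : ('C(n, t.+1))%:R = (n - t)%:R * ('C(n, t))%:R / (t.+1)%:R :> RR.
  by rewrite -h' mulrC mulKf.
rewrite hc; field; rewrite hf addrC natr1; exact: ht.
Qed.

Lemma x_big t : (n < t)%N -> x t = 0.
Proof. by move=> h; rewrite /x bin_small // mul0r. Qed.

Lemma D_le u v : (u <= v)%N -> x u * x v.+1 <= x u.+1 * x v.
Proof.
move=> uv.
case: (ltnP v n) => hv; last first.
  rewrite (@x_big v.+1) ?ltnS // mulr0; apply: mulr_ge0; exact: x_ge0.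
have hu1 : 0 < (u.+1)%:R ^+ 2 :> RR by rewrite exprn_gt0 // ltr0n.
have hv1 : 0 < (v.+1)%:R ^+ 2 :> RR by rewrite exprn_gt0 // ltr0n.
rewrite -(ler_pM2r (mulr_gt0 hu1 hv1)).
have e1 : x u * x v.+1 * ((u.+1)%:R ^+ 2 * (v.+1)%:R ^+ 2)
   = x u * x v * ((n - v)%:R * (u.+1)%:R ^+ 2).
  rewrite [LHS](_ : _ = x u * (x v.+1 * (v.+1)%:R ^+ 2) * (u.+1)%:R ^+ 2); last by ring.
  by rewrite xS; ring.
have e2 : x u.+1 * x v * ((u.+1)%:R ^+ 2 * (v.+1)%:R ^+ 2)
   = x u * x v * ((n - u)%:R * (v.+1)%:R ^+ 2).
  rewrite [LHS](_ : _ = x v * (x u.+1 * (u.+1)%:R ^+ 2) * (v.+1)%:R ^+ 2); last by ring.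
  by rewrite xS; ring.
rewrite e1 e2; apply: ler_wpM2l; first by apply: mulr_ge0; exact: x_ge0.
apply: ler_pM; rewrite ?ler0n ?exprn_ge0 ?ler0n //.
  by rewrite ler_nat; lia.
rewrite -!natrX ler_nat; apply: leq_mul; rewrite ltnS //.
Qed.

Definition D u v := x u * x v.+1 - x u.+1 * x v.
Lemma D_np u v : (u <= v)%N -> D u v <= 0.
Proof. by move=> h; rewrite /D subr_le0 D_le. Qed.
Lemma D_nn u v : (v <= u)%N -> 0 <= D u v.
Proof. by move=> h; rewrite /D subr_ge0 mulrC [x u * _]mulrC D_le. Qed.

Lemma D_prod_ge0 M (u v : 'I_M.+1) : 0 <= D (M - v) (M - u) * D u v.
Proof.
case: (leqP u v) => h.
  apply: mulr_le0; apply: D_np => //; lia.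
apply: mulr_ge0; apply: D_nn => //; lia.
Qed.

Lemma S2_ge0 M : 0 <= \sum_(k < M.+1) \sum_(i < M.+1)
   x k * x (M.+1 - i) * (x (M.+1 - k) * x i - x (M - k) * x i.+1).
Proof.
set S2 := (X in 0 <= X).
have S2E : S2 = \sum_(v < M.+1) \sum_(u < M.+1) (x (M - v) * x (M.+1 - u)) * D u v.
  rewrite /S2 (reindex_inj rev_ord_inj) /=; apply eq_bigr => v _; apply eq_bigr => u _.
  have hv : (M.+1 - (M.+1 - v.+1) = v.+1)%N by have := ltn_ord v; lia.
  have hv2 : (M - (M.+1 - v.+1) = v)%N by have := ltn_ord v; lia.
  have hv3 : (M.+1 - v.+1 = M - v)%N by lia.
  by rewrite hv hv2 hv3 /D; ring.
have S2E' : S2 = \sum_(v < M.+1) \sum_(u < M.+1) (x (M - u) * x (M.+1 - v)) * D v u.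
  by rewrite S2E exchange_big.
have H2 : S2 + S2 = \sum_(v < M.+1) \sum_(u < M.+1) D (M - v) (M - u) * D u v.
  rewrite {1}S2E S2E' -big_split; apply eq_bigr => v _; rewrite -big_split; apply eq_bigr => u _ /=.
  have hu : ((M - u).+1 = M.+1 - u)%N by have := ltn_ord u; lia.
  have hv : ((M - v).+1 = M.+1 - v)%N by have := ltn_ord v; lia.
  by rewrite /D hu hv; ring.
have : 0 <= S2 + S2.
  by rewrite H2; apply: sumr_ge0 => v _; apply: sumr_ge0 => u _; apply: D_prod_ge0.
lra.
Qed.

Lemma e_lc M : e M * e M.+2 <= e M.+1 ^+ 2.
Proof.
set T := x M.+1 * e M.+1 - x M.+2 * e M.
set A := \sum_(k < M.+1) \sum_(i < M.+2) x k * x (M.+1 - k) * (x i * x (M.+1 - i)).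
set B := \sum_(k < M.+1) \sum_(i < M.+2) x k * x (M - k) * (x i.+1 * x (M.+1 - i)).
set S1 := \sum_(k < M.+1) \sum_(i < M.+2) x k * x (M.+1 - i) * (x (M.+1 - k) * x i - x (M - k) * x i.+1).
have e1 : e M.+1 = \sum_(k < M.+1) x k * x (M.+1 - k) + x M.+1 * x 0.
  by rewrite /e big_ord_recr /= subnn.
have e2 : e M.+2 = x 0 * x M.+2 + \sum_(i < M.+2) x i.+1 * x (M.+1 - i).
  by rewrite /e big_ord_recl /= subn0.
have L1 : e M.+1 ^+ 2 = A + x M.+1 * x 0 * e M.+1.
  rewrite expr2 {1}e1 mulrDl; congr (_ + _).
  by rewrite big_distrl; apply eq_bigr => k _; rewrite /e big_distrr.
have L2 : e M * e M.+2 = B + e M * (x 0 * x M.+2).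
  rewrite e2 mulrDr addrC; congr (_ + _).
  by rewrite /e big_distrl; apply eq_bigr => k _; rewrite big_distrr.
have hAB : A - B = S1.
  rewrite /A /B /S1 -sumrB; apply eq_bigr => k _; rewrite -sumrB; apply eq_bigr => i _.
  ring.
have E : e M.+1 ^+ 2 - e M * e M.+2 = S1 + x 0 * T.
  by rewrite L1 L2 -hAB /T; ring.
rewrite -subr_ge0 E; apply: addr_ge0.
  have -> : S1 = \sum_(k < M.+1) \sum_(i < M.+1)
     x k * x (M.+1 - i) * (x (M.+1 - k) * x i - x (M - k) * x i.+1)
     + \sum_(k < M.+1) x k * x 0 * (x (M.+1 - k) * x M.+1 - x (M - k) * x M.+2).
    rewrite /S1 -big_split; apply eq_bigr => k _; rewrite big_ord_recr /= subnn //.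
  apply: addr_ge0; first exact: S2_ge0.
  apply: sumr_ge0 => k _; apply: mulr_ge0; first by apply: mulr_ge0; exact: x_ge0.
  have hk : ((M - k).+1 = M.+1 - k)%N by have := ltn_ord k; lia.
  rewrite subr_ge0 -hk; apply: D_le; lia.
apply: mulr_ge0; first exact: x_ge0.
rewrite /T /e big_ord_recr /= subnn mulrDr !big_distrr /=.
have h1 : 0 <= x M.+1 * (x M.+1 * x 0) by apply: mulr_ge0; [exact: x_ge0| apply: mulr_ge0; exact: x_ge0].
have h2 : 0 <= \sum_(i < M.+1) x M.+1 * (x i * x (M.+1 - i)) - \sum_(i < M.+1) x M.+2 * (x i * x (M - i)).
  rewrite -sumrB; apply: sumr_ge0 => k _.
  have hk : ((M - k).+1 = M.+1 - k)%N by have := ltn_ord k; lia.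
  have := @D_le (M - k) M.+1 ltac:(lia); rewrite hk => h.
  have := x_ge0 k; nra.
lra.
Qed.
End Conv.

Lemma aE n N : (a n N)%:R = (N`!)%:R * e n N :> RR.
Proof.
rewrite /a natr_sum /e mulr_sumr; apply eq_bigr => i _.
have hi : (i <= N)%N by rewrite -ltnS.
have hc : ('C(N, i))%:R = (N`!)%:R / ((i`!)%:R * ((N - i)`!)%:R) :> RR.
  by rewrite -(bin_fact hi) !natrM mulfK // mulf_neq0 // fact_neq0.
rewrite !natrM hc /x.
have h1 := fact_neq0 i. have h2 := fact_neq0 (N - i).
by field; rewrite h1 h2.
Qed.

Lemma a_lc n M : (M.+1 * a n M * a n M.+2 <= M.+2 * a n M.+1 ^ 2)%N.
Proof.
rewrite -(ler_nat RR) !natrM !aE !factS !natrM.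
have h := e_lc n M.
set e0 := e n M; set e1 := e n M.+1; set e2 := e n M.+2.
have hK : 0 <= (M.+2)%:R * (M.+1)%:R ^+ 2 * (M`!)%:R ^+ 2 :> RR.
  by rewrite !mulr_ge0 ?exprn_ge0 ?ler0n.
have h' : 0 <= e1 ^+ 2 - e0 * e2 by rewrite subr_ge0.
have := mulr_ge0 hK h'.
move=> H. nra.
Qed.

Lemma a_pos n N : (N <= n.*2)%N -> (0 < a n N)%N.
Proof.
move=> hN.
have hi : (N - minn N n < N.+1)%N by lia.
rewrite /a (bigD1 (Ordinal hi)) //=; apply: leq_trans (leq_addr _ _).
rewrite !muln_gt0 !bin_gt0; apply/andP; split; [apply/andP; split|]; lia.
Qed.

Lemma a_zero n N : (n.*2 < N)%N -> a n N = 0%N.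
Proof.
move=> hN; rewrite /a big1 // => i _.
case: (leqP i n) => hi.
  by rewrite (@bin_small n (N - i)) ?muln0 ?mul0n //; lia.
by rewrite bin_small.
Qed.

Lemma f_lc s1 s2 M : (f s1 s2 M * f s1 s2 M.+2 <= f s1 s2 M.+1 ^ 2)%N.
Proof.
rewrite !fE.
case: (leqP s2 M) => hs.
  by rewrite (@bin_small s2 M.+2) ?mul0n ?muln0 //; lia.
set cm := 'C(s2, M); set c := 'C(s2, M.+1); set cp := 'C(s2, M.+2).
set am := a s1 M; set a0 := a s1 M.+1; set ap := a s1 M.+2.
have h1 : (M.+2 * cp = (s2 - M.+1) * c)%N by rewrite /cp /c mul_bin_left.
have h2 : (M.+1 * c = (s2 - M) * cm)%N by rewrite /c /cm mul_bin_left.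
have hL := a_lc s1 M. rewrite -/am -/a0 -/ap in hL.
have hpos : (0 < (s2 - M) * M.+2)%N by rewrite muln_gt0; apply/andP; split; lia.
rewrite -(leq_pmul2l hpos) -(ler_nat RR).
have E : (((s2 - M) * M.+2) * (cm * am * (cp * ap)))%:R
   = ((M.+1 * c)%:R * (s2 - M.+1)%:R * c%:R * (am * ap)%:R : RR).
  have -> : (((s2 - M) * M.+2) * (cm * am * (cp * ap)) = ((s2 - M) * cm) * (M.+2 * cp) * (am * ap))%N.
    by rewrite !mulnA; lia.
  by rewrite -h2 h1 !natrM; ring.
rewrite E.
have hL' : (M.+1)%:R * (am * ap)%:R <= (M.+2)%:R * (a0 ^ 2)%:R :> RR.
  by rewrite -!natrM ler_nat mulnA.
have hs' : (s2 - M.+1)%:R <= (s2 - M)%:R :> RR by rewrite ler_nat; lia.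
have p1 : 0 <= (s2 - M.+1)%:R * c%:R ^+ 2 :> RR by rewrite mulr_ge0 ?exprn_ge0 ?ler0n.
have p2 : 0 <= (M.+2)%:R * (a0 ^ 2)%:R * c%:R ^+ 2 :> RR by rewrite !mulr_ge0 ?exprn_ge0 ?ler0n.
have q1 := ler_wpM2l p1 hL'.
have q2 := ler_wpM2r p2 hs'.
rewrite !natrM in q1 q2 *. rewrite ?natrX in q1 q2 *.
nra.
Qed.

Arguments a_pos {n N}. Arguments a_zero {n N}.

Lemma f_zero_succ s1 s2 N : f s1 s2 N = 0%N -> f s1 s2 N.+1 = 0%N.
Proof.
rewrite !fE => /eqP; rewrite muln_eq0 => /orP [/eqP h|/eqP h].
  have : (s2 < N)%N by rewrite ltnNge -bin_gt0 h.
  by move=> hN; rewrite bin_small ?mul0n //; lia.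
case: (leqP N s1.*2) => hN.
  by have := a_pos hN; rewrite h.
by rewrite a_zero ?muln0 //; lia.
Qed.

Lemma f_0 s1 s2 : f s1 s2 0 = 1%N.
Proof. by rewrite fE /a big_ord1 /= !bin0. Qed.

Lemma f_pos s1 s2 N : (N <= s2)%N -> (N <= s1.*2)%N -> (0 < f s1 s2 N)%N.
Proof. by move=> h1 h2; rewrite fE muln_gt0 bin_gt0 h1 a_pos. Qed.

Lemma g_bounds s1 s2 g : is_g s1 s2 g -> (g <= s2)%N /\ (g <= s1.*2)%N.
Proof.
move=> [G1 _]; have := G1 0%N; rewrite f_0 fE => h.
have : (0 < 'C(s2, g))%N /\ (0 < a s1 g)%N.
  by move: h; rewrite muln_gt0 => /andP.
case; rewrite bin_gt0 => -> h2; split => //.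
by case: (leqP g s1.*2) => // hg; move: h2; rewrite a_zero.
Qed.

Definition SCn n s2 M := (M * a n M.-1 + M * a n M <= s2 * a n M + a n M)%N.

Lemma step_link s1 s2 M : (0 < M)%N -> (M <= s1.*2)%N ->
  ((0 < f s1 s2 M)%N /\ (f s1 s2 M.-1 <= f s1 s2 M)%N) <-> SCn s1 s2 M.
Proof.
move=> hM hM2.
have ha1 : (0 < a s1 M.-1)%N by apply: a_pos; lia.
have ha : (0 < a s1 M)%N by apply: a_pos.
rewrite /SCn !fE.
case: (leqP M s2) => hs; last first.
  rewrite bin_small // mul0n ltnn; split; first by case.
  move=> h; exfalso; nia.
have hc : (0 < 'C(s2, M.-1))%N by rewrite bin_gt0; lia.
have hb := mul_bin_left s2 M.-1; rewrite prednK // in hb.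
have hs' : (s2 - M.-1 = s2 - M + 1)%N by lia.
rewrite hs' in hb.
have key : ('C(s2, M.-1) * a s1 M.-1 <= 'C(s2, M) * a s1 M)%N <->
           (M * a s1 M.-1 <= (s2 - M + 1) * a s1 M)%N.
  have E1 : (M * ('C(s2, M) * a s1 M) = 'C(s2, M.-1) * ((s2 - M + 1) * a s1 M))%N.
    by rewrite mulnA hb; ring.
  have E2 : (M * ('C(s2, M.-1) * a s1 M.-1) = 'C(s2, M.-1) * (M * a s1 M.-1))%N by ring.
  by rewrite -(leq_pmul2l hM) E1 E2 leq_pmul2l.
have key2 : (M * a s1 M.-1 <= (s2 - M + 1) * a s1 M)%N <-> SCn s1 s2 M.
  rewrite /SCn; split => h; nia.
rewrite -key2 -key; split; first by case.
by move=> h; split => //; rewrite muln_gt0 bin_gt0 hs.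
Qed.


Lemma phi_real (n I J : RR) : 2 <= I + J -> 0 <= I -> 0 <= J ->
  (I + J + 1) ^+ 2 + (I + J + 1) <= 2 * n + 2 ->
  2 * (I + 1) ^+ 2 * (J + 1) ^+ 2 <= (n - I) * (J + 1) ^+ 2 + (n - J) * (I + 1) ^+ 2.
Proof.
move=> hK hI hJ hn.
set p := I + 1; set q := J + 1; set s := p + q; set w := n + 1.
have hs : 4 <= s by rewrite /s /p /q; lra.
have h1 : 0 <= (2 * w - s * (s - 1)) * (p ^+ 2 + q ^+ 2).
  apply: mulr_ge0; first by rewrite /w /s /p /q; lra.
  by rewrite addr_ge0 // sqr_ge0.
have h2 : 0 <= s ^+ 3 * (s - 4) by apply: mulr_ge0; [rewrite exprn_ge0 //; lra| lra].
have h3 : 0 <= (p - q) ^+ 2 * (4 * s ^+ 2 - (p - q) ^+ 2).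
  apply: mulr_ge0; first exact: sqr_ge0.
  have -> : 4 * s ^+ 2 - (p - q) ^+ 2 = (p + 3 * q) * (3 * p + q) by rewrite /s; ring.
  by apply: mulr_ge0; rewrite /p /q; lra.
have E : 8 * ((n - I) * q ^+ 2 + (n - J) * p ^+ 2 - 2 * p ^+ 2 * q ^+ 2)
   = 4 * ((2 * w - s * (s - 1)) * (p ^+ 2 + q ^+ 2)) + s ^+ 3 * (s - 4)
     + (p - q) ^+ 2 * (4 * s ^+ 2 - (p - q) ^+ 2).
  by rewrite /s /w /p /q; ring.
rewrite -/p -/q; lra.
Qed.

Lemma phi_nat n i j : (1 <= n)%N -> ((i + j).+1 ^ 2 + (i + j).+1 <= n.*2 + 2)%N ->
  (2 * (i.+1) ^ 2 * (j.+1) ^ 2 <= (n - i) * (j.+1) ^ 2 + (n - j) * (i.+1) ^ 2)%N.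
Proof.
move=> hn hK.
have hi : (i <= n)%N by nia.
have hj : (j <= n)%N by nia.
case: (leqP 2 (i + j)) => hij; last first.
  have : (i + j = 0 \/ i + j = 1)%N by lia.
  case=> h.
    have -> : i = 0%N by lia. have -> : j = 0%N by lia. lia.
  have [[-> ->]|[-> ->]] : ((i = 0 /\ j = 1) \/ (i = 1 /\ j = 0))%N by lia.
    have : (2 <= n)%N by lia. lia.
  have : (2 <= n)%N by lia. lia.
have e1 : ((i + j).+1)%:R = (i + j)%:R + 1 :> RR by rewrite -natr1.
have ei : (i.+1)%:R = i%:R + 1 :> RR by rewrite -natr1.
have ej : (j.+1)%:R = j%:R + 1 :> RR by rewrite -natr1.
have hK' : ((i + j)%:R + 1) ^+ 2 + ((i + j)%:R + 1) <= 2 * n%:R + 2 :> RR.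
  move: hK; rewrite -(ler_nat RR) !natrD ?natrX ?natrM e1 -mul2n natrM => h.
  by rewrite natrD expr2 in h.
have H := @phi_real n%:R i%:R j%:R ltac:(rewrite -natrD ler_nat //) (ler0n _ _) (ler0n _ _) ltac:(rewrite -natrD; exact hK').
rewrite -(ler_nat RR) !natrD !natrM ?natrX natrB // natrB // ei ej.
rewrite !expr2 in H. lra.
Qed.
Arguments phi_nat {n i j}.

Lemma term_ineq n i j : (1 <= n)%N -> ((i + j).+1 ^ 2 + (i + j).+1 <= n.*2 + 2)%N ->
  2 * (x n i * x n j) <= x n i.+1 * x n j + x n i * x n j.+1.
Proof.
move=> hn hK.
set A := (i.+1)%:R ^+ 2 : RR; set B := (j.+1)%:R ^+ 2 : RR.
have hA : 0 < A by rewrite /A exprn_gt0 // ltr0n.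
have hB : 0 < B by rewrite /B exprn_gt0 // ltr0n.
rewrite -(ler_pM2r (mulr_gt0 hA hB)).
have E : (x n i.+1 * x n j + x n i * x n j.+1) * (A * B)
   = x n i * x n j * ((n - i)%:R * B + (n - j)%:R * A).
  rewrite [LHS](_ : _ = (x n i.+1 * A) * x n j * B + (x n j.+1 * B) * x n i * A); last by ring.
  by rewrite !xS; ring.
rewrite E [X in X <= _](_ : _ = x n i * x n j * (2 * A * B)); last by ring.
apply: ler_wpM2l; first by apply: mulr_ge0; exact: x_ge0.
have := phi_nat hn hK; rewrite -(ler_nat RR) !natrD !natrM ?natrX => h.
rewrite /A /B; exact: h.
Qed.
Arguments term_ineq {n i j}.

Lemma e_step n K : (1 <= n)%N -> ((K.+1) ^ 2 + K.+1 <= n.*2 + 2)%N -> e n K <= e n K.+1.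
Proof.
move=> hn hK.
have eL : e n K.+1 = x n 0 * x n K.+1 + \sum_(i < K.+1) x n i.+1 * x n (K - i).
  by rewrite /e big_ord_recl /=.
have eR : e n K.+1 = \sum_(i < K.+1) x n i * x n (K.+1 - i) + x n K.+1 * x n 0.
  by rewrite /e big_ord_recr /= subnn.
have S : 2 * e n K <= \sum_(i < K.+1) x n i.+1 * x n (K - i) + \sum_(i < K.+1) x n i * x n (K.+1 - i).
  rewrite /e mulr_sumr -big_split /=; apply: ler_sum => i _.
  have hi : (i <= K)%N by rewrite -ltnS.
  have e1 : (K.+1 - i = (K - i).+1)%N by lia.
  rewrite e1; apply: term_ineq => //.
  by have -> : (i + (K - i) = K)%N by lia.
have p : 0 <= x n 0 * x n K.+1 by apply: mulr_ge0; exact: x_ge0.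
lra.
Qed.
Arguments e_step {n K}.

Lemma a_step_a n N : (1 <= n)%N -> (1 <= N)%N -> (N ^ 2 + N <= n.*2 + 2)%N ->
  (N * a n N.-1 <= a n N)%N.
Proof.
case: N => [|K] // hn _ h.
rewrite -(ler_nat RR) natrM !aE /= factS natrM.
have := e_step hn h.
have : 0 <= (K.+1)%:R * (K`!)%:R :> RR by rewrite mulr_ge0 ?ler0n.
nra.
Qed.


Lemma a_top n j : (j <= n)%N -> a n (n.*2 - j) =
  (\sum_(u < j.+1) 'C(n, u) * 'C(n, j - u) * 'C(n.*2 - j, n - u))%N.
Proof.
move=> hj; rewrite /a; set N := (n.*2 - j)%N.
rewrite -(big_mkord xpredT (fun i => 'C(n, i) * 'C(n, N - i) * 'C(N, i))%N).
rewrite (@big_cat_nat _ _ _ (n - j)) //=; last by rewrite /N; lia.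
rewrite (@big_cat_nat _ _ _ n.+1 (n - j) N.+1) //=; [|lia|rewrite /N; lia].
rewrite [X in (X + _)%N]big_nat_cond [X in (X + _)%N]big1 ?add0n; last first.
  move=> i /andP [/andP [_ hi] _]; rewrite (@bin_small n (N - i)) ?muln0 ?mul0n //.
  rewrite /N; lia.
rewrite [X in (_ + X)%N]big_nat_cond [X in (_ + X)%N]big1 ?addn0; last first.
  move=> i /andP [/andP [hi _] _]; rewrite (@bin_small n i) ?mul0n //.
rewrite -{1}[(n - j)%N]add0n big_addn.
have -> : (n.+1 - (n - j) = j.+1)%N by lia.
rewrite big_nat_rev /= big_mkord; apply: eq_bigr => u _.
have hu : (u < j.+1)%N := ltn_ord u.
have -> : (0 + j.+1 - u.+1 + (n - j) = n - u)%N by lia.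
rewrite bin_sub; last by lia.
have -> : (N - (n - u) = n - (j - u))%N by rewrite /N; lia.
rewrite bin_sub //; lia.
Qed.

Lemma binC_top n j u : (u <= j)%N -> (j <= n)%N ->
  ((n.*2) ^_ j * 'C(n.*2 - j, n - u) = 'C(n.*2, n) * (n ^_ u * n ^_ (j - u)))%N.
Proof.
move=> hu hj.
set K := ((n - u)`! * (n - (j - u))`!)%N.
have hK : (0 < K)%N by rewrite /K muln_gt0 !fact_gt0.
apply/eqP; rewrite -(eqn_pmul2r hK); apply/eqP.
transitivity (n.*2)`!.
  rewrite -mulnA /K.
  have -> : (n - (j - u) = n.*2 - j - (n - u))%N by lia.
  rewrite bin_fact; last by lia.
  by rewrite ffact_fact //; lia.
rewrite /K.
have -> : ('C(n.*2, n) * (n ^_ u * n ^_ (j - u)) * ((n - u)`! * (n - (j - u))`!)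
   = 'C(n.*2, n) * ((n ^_ u * (n - u)`!) * (n ^_ (j - u) * (n - (j - u))`!)))%N by ring.
rewrite !ffact_fact; [|lia|lia].
have := @bin_fact n.*2 n ltac:(lia).
by have -> : (n.*2 - n = n)%N by lia.
Qed.

Definition cc n u := ('C(n, u) * n ^_ u)%N.

Lemma a_top2 n j : (j <= n)%N ->
  ((n.*2) ^_ j * a n (n.*2 - j) = 'C(n.*2, n) * \sum_(u < j.+1) cc n u * cc n (j - u))%N.
Proof.
move=> hj; rewrite a_top // !big_distrr /=; apply: eq_bigr => u _.
have hu : (u <= j)%N by rewrite -ltnS.
rewrite /cc.
have := @binC_top n j u hu hj.
move=> h.
rewrite [LHS](_ : _ = 'C(n, u) * 'C(n, j - u) * ((n.*2) ^_ j * 'C(n.*2 - j, n - u)))%N; last by ring.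
by rewrite h; ring.
Qed.


Definition ccx (u : nat) (y : RR) : RR := (\prod_(k < u) (y - k%:R)) ^+ 2 / (u`!)%:R.
Definition Qx (j : nat) (y : RR) : RR := \sum_(u < j.+1) ccx u y * ccx (j - u) y.

Lemma ffR n u : (u <= n)%N -> (n ^_ u)%:R = \prod_(k < u) (n%:R - k%:R) :> RR.
Proof.
elim: u => [|u IH] hu; first by rewrite ffactn0 big_ord0.
by rewrite ffactnSr natrM IH ?natrB 1?ltnW // big_ord_recr /=.
Qed.

Lemma ccR n u : (u <= n)%N -> (cc n u)%:R = ccx u n%:R.
Proof.
move=> hu; rewrite /ccx -ffR // /cc.
have h := bin_ffact n u.
have hf : (u`!)%:R != 0 :> RR by rewrite pnatr_eq0 -lt0n fact_gt0.
rewrite -h !natrM expr2; field => //.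
Qed.

Definition Qr n j : RR := (\sum_(u < j.+1) cc n u * cc n (j - u))%:R.

Lemma QrE n j : (j <= n)%N -> Qr n j = Qx j n%:R.
Proof.
move=> hj; rewrite /Qr /Qx natr_sum; apply: eq_bigr => u _.
have hu : (u <= j)%N by rewrite -ltnS.
by rewrite natrM !ccR //; lia.
Qed.

Definition bb d (y : RR) : RR := (4 * (y ^+ 2 + y) - (d.+1 * d.+2)%:R) / (2 * d.+1%:R).
Definition TT d (y : RR) : RR := 1 - (2 * y - d%:R).
Definition p1 d (y : RR) : RR := (bb d y + TT d y) * Qx d y - Qx d.+1 y.

Lemma p1_0 y : p1 0 y = 0.
Proof. rewrite /p1 /bb /TT /Qx /ccx /= !big_ord_recr !big_ord0 /= ?factS ?fact0 /=. by field. Qed.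
Lemma p1_1 y : p1 1 y = 0.
Proof. rewrite /p1 /bb /TT /Qx /ccx /= !big_ord_recr !big_ord0 /= ?factS ?fact0 /=. by field. Qed.
Lemma p1_2 y : p1 2 y = y ^+ 2 * (2 * y - 1) / 3.
Proof. rewrite /p1 /bb /TT /Qx /ccx /= !big_ord_recr !big_ord0 /= ?factS ?fact0 /=. by field. Qed.
Lemma p1_3 y : p1 3 y = y ^+ 2 * (y - 1) ^+ 3.
Proof. rewrite /p1 /bb /TT /Qx /ccx /= !big_ord_recr !big_ord0 /= ?factS ?fact0 /=. by field. Qed.
Lemma p1_4 y : p1 4 y = y ^+ 2 * (y - 1) ^+ 2 * (2 * y - 3) * (2 * y ^+ 2 - 6 * y + 6) / 5.
Proof. rewrite /p1 /bb /TT /Qx /ccx /= !big_ord_recr !big_ord0 /= ?factS ?fact0 /=. by field. Qed.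
Lemma p2_0 y : p1 0 y - 1 / 2 * Qx 0 y = - (1 / 2).
Proof. rewrite /p1 /bb /TT /Qx /ccx /= !big_ord_recr !big_ord0 /= ?factS ?fact0 /=. by field. Qed.
Lemma p2_1 y : p1 1 y - 1 / 4 * Qx 1 y = - (y ^+ 2 / 2).
Proof. rewrite /p1 /bb /TT /Qx /ccx /= !big_ord_recr !big_ord0 /= ?factS ?fact0 /=. by field. Qed.
Lemma p2_2 y : p1 2 y - 1 / 3 * Qx 2 y = - (2 * y ^+ 2 * (y - 1) ^+ 2 / 3).
Proof. rewrite /p1 /bb /TT /Qx /ccx /= !big_ord_recr !big_ord0 /= ?factS ?fact0 /=. by field. Qed.
Lemma p2_3 y : p1 3 y - 1 / 2 * Qx 3 y = y ^+ 2 * (y - 1) ^+ 2 * (- 2 * y ^+ 2 + 5 * y - 5) / 3.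
Proof. rewrite /p1 /bb /TT /Qx /ccx /= !big_ord_recr !big_ord0 /= ?factS ?fact0 /=. by field. Qed.
Lemma p2_4 y : p1 4 y - 1 / 5 * Qx 4 y = y ^+ 2 * (y - 1) ^+ 2 * (- 2 * y ^+ 4 + 20 * y ^+ 3 - 68 * y ^+ 2 + 105 * y - 63) / 15.
Proof. rewrite /p1 /bb /TT /Qx /ccx /= !big_ord_recr !big_ord0 /= ?factS ?fact0 /=. by field. Qed.

Lemma SC_poly n s2 d : (d.+1 <= n)%N ->
  SCn n s2 (n.*2 - d) <-> Qr n d.+1 <= (s2%:R + (1 - (n.*2 - d)%:R)) * Qr n d.
Proof.
move=> hd.
set M := (n.*2 - d)%N.
have hM1 : (M.-1 = n.*2 - d.+1)%N by rewrite /M; lia.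
set A1 := a n (n.*2 - d.+1); set A0 := a n M.
set Kd := ((n.*2) ^_ d)%N; set C := 'C(n.*2, n).
have hKd : (0 < Kd)%N by rewrite /Kd ffact_gt0; lia.
have hC : (0 < C)%N by rewrite /C bin_gt0; lia.
have E1 : Kd%:R * M%:R * A1%:R = C%:R * Qr n d.+1 :> RR.
  rewrite /Qr -!natrM /Kd /M -ffactnSr /A1 a_top2 //.
have E0 : Kd%:R * A0%:R = C%:R * Qr n d :> RR.
  rewrite /Qr -!natrM /Kd /A0 /M a_top2 //; lia.
have step1 : SCn n s2 M <-> M%:R * A1%:R <= (s2%:R + (1 - M%:R)) * A0%:R :> RR.
  rewrite /SCn hM1 -/A1 -/A0 -(ler_nat RR) !natrD !natrM.
  split => h; lra.
rewrite step1.
have hKdR : 0 < Kd%:R :> RR by rewrite ltr0n.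
have hCR : 0 < C%:R :> RR by rewrite ltr0n.
rewrite -(ler_pM2l hKdR).
have -> : Kd%:R * (M%:R * A1%:R) = C%:R * Qr n d.+1 by rewrite -E1 mulrA.
have -> : Kd%:R * ((s2%:R + (1 - M%:R)) * A0%:R) = C%:R * ((s2%:R + (1 - M%:R)) * Qr n d) :> RR.
  by rewrite [RHS]mulrCA -E0; ring.
by rewrite ler_pM2l.
Qed.

Definition Bnat d n s2 := ((n * n + n) * 4 <= d.+1 * s2 * 2 + d.+1 * d.+2)%N.

Lemma L1 {A B C D k : nat} : (B * C * 2 + D + k <= A * 4)%N ->
  C%:R * (2 * B%:R) <= 4 * A%:R - D%:R - k%:R :> RR.
Proof. rewrite -(ler_nat RR) !natrD !natrM => h; lra. Qed.
Lemma L2 {A B C D : nat} : (A * 4 <= B * C * 2 + D)%N ->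
  4 * A%:R - D%:R <= C%:R * (2 * B%:R) :> RR.
Proof. rewrite -(ler_nat RR) !natrD !natrM => h; lra. Qed.

Lemma crit (S b g Q0 Q1 T : RR) : 0 <= Q0 -> 0 <= (b + T) * Q0 - Q1 ->
  (b + T) * Q0 - Q1 - g * Q0 < 0 ->
  (b <= S -> Q1 <= (S + T) * Q0) /\ (S <= b - g -> ~ (Q1 <= (S + T) * Q0)).
Proof.
move=> hQ h1 h2; split => hS.
  have hS' : 0 <= S - b by rewrite subr_ge0.
  have := mulr_ge0 hS' hQ; nra.
have hS' : 0 <= b - g - S by rewrite subr_ge0.
have := mulr_ge0 hS' hQ; nra.
Qed.

Lemma step_of d n s2 (g : RR) (k : nat) : (d.+1 <= n)%N ->
  0 <= p1 d n%:R -> p1 d n%:R - g * Qx d n%:R < 0 ->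
  g = k%:R / (2 * d.+1%:R) ->
  (~~ Bnat d n s2 -> (d.+1 * s2 * 2 + d.+1 * d.+2 + k <= (n * n + n) * 4)%N) ->
  SCn n s2 (n.*2 - d) <-> Bnat d n s2.
Proof.
move=> hd hp1 hp2 hg hk.
rewrite SC_poly // !QrE //; last by lia.
set y := n%:R.
have hT : 1 - (n.*2 - d)%:R = TT d y.
  by rewrite /TT natrB; [rewrite -mul2n natrM | lia].
rewrite hT.
have hQ0 : 0 <= Qx d y by rewrite /y -QrE ?ler0n //; lia.
have [c1 c2] := @crit s2%:R (bb d y) g (Qx d y) (Qx d.+1 y) (TT d y) hQ0 hp1 hp2.
have hz : 0 < 2 * d.+1%:R :> RR by rewrite mulr_gt0 // ltr0n.
split.
  move=> hSC; apply/negPn/negP => hB.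
  have := L1 (A := (n * n + n)%N) (hk hB); rewrite natrD natrM => h.
  apply: (c2 _ hSC).
  rewrite hg /bb -mulrBl ler_pdivlMr //; rewrite /y ?expr2; lra.
move=> hB; apply: c1.
have := L2 (A := (n * n + n)%N) hB; rewrite natrD natrM => h.
rewrite /bb ler_pdivrMr //; rewrite /y ?expr2; lra.
Qed.

Lemma big_case d n s2 : (d <= 4)%N -> (6 <= n)%N -> SCn n s2 (n.*2 - d) <-> Bnat d n s2.
Proof.
move=> hd hn.
have y6 : 6 <= n%:R :> RR by rewrite (ler_nat RR 6).
set y := n%:R in y6 *.
have hy2 : 0 < y ^+ 2 by rewrite exprn_gt0 //; lra.
have hy1 : 0 < (y - 1) ^+ 2 by rewrite exprn_gt0 //; lra.
have hyy : 0 < y ^+ 2 * (y - 1) ^+ 2 by apply: mulr_gt0.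
case: d hd => [|[|[|[|[|d]]]]] // _.
- apply: (@step_of 0 n s2 (1 / 2) 1).
  + lia.
  + by rewrite p1_0.
  + by rewrite -/y p2_0; lra.
  + by field.
  + by rewrite /Bnat => h; lia.
- apply: (@step_of 1 n s2 (1 / 4) 1).
  + lia.
  + by rewrite p1_1.
  + rewrite -/y p2_1; have : 0 < y ^+ 2 / 2 by apply: divr_gt0. 
    lra.
  + by field.
  + by rewrite /Bnat => h; lia.
- apply: (@step_of 2 n s2 (1 / 3) 2).
  + lia.
  + rewrite -/y p1_2; apply: divr_ge0; last lra.
    by apply: mulr_ge0; [lra|lra].
  + rewrite -/y p2_2.
    have : 0 < 2 * y ^+ 2 * (y - 1) ^+ 2 / 3 by rewrite !mulr_gt0 //; lra.
    lra.
  + by field.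
  + by rewrite /Bnat => h; lia.
- apply: (@step_of 3 n s2 (1 / 2) 4).
  + lia.
  + rewrite -/y p1_3; apply: mulr_ge0; first lra.
    by apply: exprn_ge0; lra.
  + rewrite -/y p2_3.
    have h : 0 < 2 * y ^+ 2 - 5 * y + 5 by nra.
    have : 0 < y ^+ 2 * (y - 1) ^+ 2 * (2 * y ^+ 2 - 5 * y + 5) / 3.
      by apply: divr_gt0 => //; apply: mulr_gt0.
    lra.
  + by field.
  + by rewrite /Bnat => h; lia.
- apply: (@step_of 4 n s2 (1 / 5) 2).
  + lia.
  + rewrite -/y p1_4; apply: divr_ge0; last lra.
    apply: mulr_ge0; last by nra.
    apply: mulr_ge0; last lra.
    by apply: ltW.
  + rewrite -/y p2_4.
    set z := y - 6.
    have hz : 0 <= z by rewrite /z; lra.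
    have E : - 2 * y ^+ 4 + 20 * y ^+ 3 - 68 * y ^+ 2 + 105 * y - 63
       = - (153 + 279 * z + 140 * z ^+ 2 + 28 * z ^+ 3 + 2 * z ^+ 4).
      by rewrite /z; ring.
    have h : 0 < 153 + 279 * z + 140 * z ^+ 2 + 28 * z ^+ 3 + 2 * z ^+ 4.
      have := exprn_ge0 2 hz; have := exprn_ge0 3 hz; have := exprn_ge0 4 hz; lra.
    rewrite E.
    have : 0 < y ^+ 2 * (y - 1) ^+ 2 * (153 + 279 * z + 140 * z ^+ 2 + 28 * z ^+ 3 + 2 * z ^+ 4) / 15.
      by apply: divr_gt0 => //; apply: mulr_gt0.
    lra.
  + by field.
  + by rewrite /Bnat => h; lia.
Qed.


Definition a_c n N := sumn [seq ('C(n, i) * 'C(n, N - i) * 'C(N, i))%N | i <- iota 0 N.+1].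
Lemma a_cE n N : a n N = a_c n N.
Proof. by rewrite /a /a_c -(big_mkord xpredT (fun i => 'C(n, i) * 'C(n, N - i) * 'C(N, i))%N) /index_iota subn0 sumnE big_map. Qed.

Ltac eval_a := rewrite ?a_cE; repeat match goal with |- context [a_c ?n ?M] =>
  let v := eval vm_compute in (a_c n M) in rewrite (_ : a_c n M = v); [| by vm_compute] end.

Lemma small_case d n s2 : (d <= 4)%N -> (1 <= n <= 5)%N -> (d < n.*2)%N ->
  SCn n s2 (n.*2 - d) <-> Bnat d n s2.
Proof.
move=> hd /andP [h1 h5] hdn.
rewrite /SCn /Bnat.
case: n h1 h5 hdn => [|[|[|[|[|[|n]]]]]] // _ _;
case: d hd => [|[|[|[|[|d]]]]] // _ _; eval_a; split => h; lia.
Qed.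


Lemma step_all d n s2 : (d <= 4)%N -> (1 <= n)%N -> (d < n.*2)%N ->
  SCn n s2 (n.*2 - d) <-> Bnat d n s2.
Proof.
move=> hd hn hdn.
case: (leqP 6 n) => h6; first exact: big_case.
apply: small_case => //; lia.
Qed.

Lemma bound_iff d s1 s2 :
  ((s2%:R : RR) >= 2 / (d.+1)%:R * ((s1 ^ 2 + s1)%N%:R) - (d + 2)%N%:R / 2) <-> Bnat d s1 s2.
Proof.
have hD : 0 < (d.+1)%:R :> RR by rewrite ltr0n.
have h2D : 0 < 2 * (d.+1)%:R :> RR by rewrite mulr_gt0.
rewrite -(ler_pM2r h2D).
have -> : (2 / (d.+1)%:R * ((s1 ^ 2 + s1)%N%:R) - (d + 2)%N%:R / 2) * (2 * (d.+1)%:R)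
   = 4 * (s1 ^ 2 + s1)%N%:R - (d + 2)%N%:R * (d.+1)%:R :> RR.
  by field; rewrite addrC natr1 lt0r_neq0.
rewrite /Bnat -(ler_nat RR) addn2.
change (s1 ^ 2)%N with (s1 * s1)%N.
rewrite natrD natrM natrD natrM natrM.
by split => h; lra.
Qed.

Lemma part_a_nat s1 s2 :
  (s2%:R : RR) <= (Num.sqrt ((8 * s1 + 9)%N%:R : RR) - 1) / 2 -> (s2 * s2 + s2 <= s1.*2 + 2)%N.
Proof.
move=> H.
set z := ((8 * s1 + 9)%N%:R : RR).
have hz : 0 <= z by rewrite ler0n.
have hsq := sqr_sqrtr hz.
have hs0 := sqrtr_ge0 z.
have h1 : 2 * s2%:R + 1 <= Num.sqrt z by lra.
have h2 : (2 * s2%:R + 1) ^+ 2 <= z.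
  have h3 : 0 <= (Num.sqrt z - (2 * s2%:R + 1)) * (Num.sqrt z + (2 * s2%:R + 1)).
    by have := ler0n RR s2; move=> ?; apply: mulr_ge0; lra.
  rewrite -hsq; nra.
move: h2; rewrite /z natrD natrM => h2.
rewrite -(ler_nat RR) natrD natrM natrD -mul2n natrM.
rewrite expr2 in h2; lra.
Qed.

Theorem proposition1p3 (s1 s2 g : nat) :
  (1 <= s1)%N -> is_g s1 s2 g ->
  ((s2%:R : Rdefinitions.R) <= (Num.sqrt ((8 * s1 + 9)%N%:R : Rdefinitions.R) - 1) / 2 -> g = s2) /\
  (g <= 2 * s1)%N /\
  (forall d : nat, (d <= 4)%N ->
     ((2 * s1 - d <= g)%N <->
      (s2%:R : Rdefinitions.R) >= 2 / (d.+1)%:R * ((s1 ^ 2 + s1)%N%:R) - (d + 2)%N%:R / 2)).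
Proof.
move=> hs1 hg.
have [hgs2 hg2] := g_bounds _ _ _ hg.
have [G1 G2] := hg.
have GI := @g_iff (f s1 s2) (f_lc s1 s2) (@f_zero_succ s1 s2) g G1 G2.
have f0 : (0 < f s1 s2 0)%N by rewrite f_0.
split.
  move=> H; have hq := part_a_nat _ _ H.
  case: (posnP s2) => hs2.
    by move: hgs2; rewrite hs2; lia.
  have hs2b : (s2 <= s1.*2)%N by nia.
  apply/eqP; rewrite eqn_leq hgs2 /=.
  apply/(GI s2 hs2 f0); split; first by apply: f_pos.
  rewrite !fE binn mul1n.
  have [K eK] : exists K, s2 = K.+1 by exists s2.-1; lia.
  rewrite eK /= binSn -eK.
  have -> : K = s2.-1 by lia.
  apply: a_step_a => //; change (s2 ^ 2)%N with (s2 * s2)%N; lia.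
split; first by lia.
move=> d hd.
rewrite bound_iff.
case: (ltnP d s1.*2) => hdn; last first.
  have -> : (2 * s1 - d = 0)%N by lia.
  split => // _; rewrite /Bnat.
  have : (s1 = 1 \/ s1 = 2)%N by lia.
  by case=> hh; subst s1; nia.
have hM : (0 < 2 * s1 - d)%N by lia.
have -> : (2 * s1 - d = s1.*2 - d)%N by lia.
rewrite (GI (s1.*2 - d)%N ltac:(lia) f0) step_link; [|lia|lia].
exact: step_all.
Qed.
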